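(* Let $n$ be a positive integer and let $a,b$ be distinct integers with $0<a,b<n$, so that $G=C_{2n}(a,b,n)$ is a $5$-regular circulant graph. Suppose there exists a generator $g$ of the cyclic group $(\mathbb{Z}_{2n},+)$ such that, writing $a=p\cdot g$ and $b=q\cdot g$ with $p,q\in\{0,1,\dots,2n-1\}$ (i.e. $pg\equiv a$ and $qg\equiv b \pmod{2n}$), the number $r=\min\{p,q,2n-p,2n-q\}$ satisfies $r\geq \lceil \tfrac{2n}{3}\rceil$. Then $G$ is word-representable.
   Context: Two distinct letters $x,y$ alternate in a word $w$ if, after deleting all other letters from $w$, the resulting word is of the form $xyxy\cdots$ or $yxyx\cdots$ (of even or odd length). A graph $G=(V,E)$ is word-representable if there is a word $w$ over the alphabet $V$, containing every letter of $V$ at least once, such that for all distinct $x,y\in V$, $xy\in E$ if and only if $x$ and $y$ alternate in $w$. For an integer $m$ and a set $R$ of positive integers each at most $m/2$, the circulant graph $C_m(R)$ has vertex set $\{0,1,\dots,m-1\}$, with $i$ and $j$ adjacent iff $\min(|i-j|,\,m-|i-j|)\in R$. $C_{2n}(a,b,n)$ denotes the circulant graph on $2n$ vertices with jump set $\{a,b,n\}$. For an integer $k$ and $g\in\mathbb{Z}_{2n}$, $k\cdot g$ denotes the $k$-fold sum of $g$ in $\mathbb{Z}_{2n}$. *)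

(* Defs.v *)
From mathcomp Require Import all_boot.
Set Implicit Arguments. Unset Strict Implicit. Unset Printing Implicit Defensive.

Definition alternate (V : eqType) (x y : V) (w : seq V) : Prop :=
  let s := [seq z <- w | (z == x) || (z == y)] in
  s = [seq (if odd i then y else x) | i <- iota 0 (size s)] \/
  s = [seq (if odd i then x else y) | i <- iota 0 (size s)].

Definition word_representable (V : finType) (E : rel V) : Prop :=
  exists w : seq V, (forall v : V, v \in w) /\
    (forall x y : V, x != y -> (E x y <-> alternate x y w)).

Definition circ_dist (m i j : nat) : nat :=
  let d := if i <= j then j - i else i - j in minn d (m - d).

Definition circulant (m : nat) (R : seq nat) : rel 'I_m :=
  fun i j => circ_dist m i j \in R.

(* Main.v *)
Require Import Defs.
From mathcomp Require Import all_boot zify.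
Set Implicit Arguments. Unset Strict Implicit. Unset Printing Implicit Defensive.

Section Gen.
Variable V : finType.

Definition altseq (x y : V) (m k : nat) := [seq (if odd i then y else x) | i <- iota m k].

Lemma altseq_sorted (x y : V) m k : x != y -> sorted (fun a b => a != b) (altseq x y m k).
Proof.
move=> xy; elim: k m => [|k IH] m //=.
have := IH m.+1; rewrite /altseq /=; case: k IH => [|k] IH //= H.
rewrite H andbT; case: (odd m) => //=; by rewrite eq_sym.
Qed.

Lemma alt_sorted (x y : V) (w : seq V) : x != y -> alternate x y w ->
  sorted (fun a b => a != b) [seq z <- w | (z == x) || (z == y)].
Proof.
move=> xy [->|->]; first exact: altseq_sorted.
by apply: altseq_sorted; rewrite eq_sym.
Qed.

Lemma flat_alt (x y : V) k : flatten (nseq k [:: x; y]) = altseq x y 0 (k.*2).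
Proof.
elim: k => [|k IH] //=.
rewrite IH /altseq doubleS /= -(addn0 2) iotaDl -map_comp.
congr [:: _, _ & _]; apply: eq_map => i /=; by rewrite negbK add0n.
Qed.

Lemma size_altseq (x y : V) m k : size (altseq x y m k) = k.
Proof. by rewrite size_map size_iota. Qed.

Definition pr (x y : V) := fun z : V => (z == x) || (z == y).

Lemma filter_sortK (K : V -> nat) s t : K s < K t ->
  [seq z <- sort (fun u v => K u <= K v) (enum V) | pr s t z] = [:: s; t].
Proof.
move=> Kst.
have st : s != t by apply/eqP => E; move: Kst; rewrite E ltnn.
set l := [seq z <- _ | _].
have so : sorted (fun u v => K u <= K v) l.
  apply: sorted_filter; first by move=> a b c; apply: leq_trans.
  apply: sort_sorted => a b; exact: leq_total.
have pe : perm_eq l [:: s; t].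
  apply: uniq_perm.
  - by rewrite filter_uniq // sort_uniq enum_uniq.
  - by rewrite /= mem_seq1 st.
  - by move=> z; rewrite mem_filter mem_sort mem_enum andbT !inE.
have := perm_size pe; case: l so pe => [|a [|b [|c l]]] //= so pe _.
have ha : a \in [:: s; t] by rewrite -(perm_mem pe) inE eqxx.
have hb : b \in [:: s; t] by rewrite -(perm_mem pe) !inE eqxx orbT.
have ab : a != b.
  by have := perm_uniq pe; rewrite /= !mem_seq1 st !andbT => ->.
move: ha hb ab so; rewrite !inE => /orP[]/eqP-> /orP[]/eqP->; rewrite ?eqxx //.
by rewrite andbT leqNgt Kst.
Qed.

Lemma pr_sym x y : pr x y =1 pr y x.
Proof. by move=> z; rewrite /pr orbC. Qed.

Lemma filter_comm (a b : pred V) (l : seq V) :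
  [seq z <- [seq z <- l | b z] | a z] = [seq z <- [seq z <- l | a z] | b z].
Proof. by rewrite -!filter_predI; apply: eq_filter => z /=; rewrite andbC. Qed.

Lemma sorted_infix (r : rel V) (l1 l2 l3 : seq V) :
  sorted r (l1 ++ l2 ++ l3) -> sorted r l2.
Proof. by move/cat_sorted2 => [_ /cat_sorted2 []]. Qed.

End Gen.

Section Col.
Variables (V : finType) (E : rel V) (col : V -> nat).
Hypothesis Esym : forall x y, E x y = E y x.
Hypothesis colB : forall v, col v < 3.
Hypothesis colP : forall u v, E u v -> col u != col v.

Let N := #|V|.
Let idx (v : V) : nat := enum_rank v.
Definition key0 v := col v * N + idx v.

Lemma idx_lt v : idx v < N. Proof. exact: ltn_ord. Qed.

Lemma key0_col u v : col u < col v -> key0 u < key0 v.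
Proof.
move=> h; rewrite /key0.
have h1 : (col u).+1 * N <= col v * N by rewrite leq_mul2r h orbT.
have := idx_lt u; rewrite mulSn in h1; lia.
Qed.

Lemma key0_lt3 v : key0 v < 3 * N.
Proof.
rewrite /key0; have h1 : col v * N <= 2 * N by rewrite leq_mul2r; have := colB v; lia.
have := idx_lt v; lia.
Qed.

Lemma key0_colle u v : key0 u < key0 v -> col u <= col v.
Proof. move=> h; rewrite leqNgt; apply/negP => /key0_col; lia. Qed.

Lemma key0_inj u v : key0 u = key0 v -> u = v.
Proof.
move=> h; case: (ltngtP (col u) (col v)) => c.
- by move: (key0_col c); rewrite h ltnn.
- by move: (key0_col c); rewrite h ltnn.
move: h; rewrite /key0 c => /addnI h; apply: enum_rank_inj; exact: val_inj.
Qed.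

Lemma edge_col s t : E s t -> key0 s < key0 t -> col s < col t.
Proof.
move=> e k; have := colP e; have := key0_colle k; rewrite leq_eqVlt => /orP[/eqP->|//].
by rewrite eqxx.
Qed.

Definition leK (K : V -> nat) := fun u v => K u <= K v.
Definition P0 := sort (leK key0) (enum V).
Definition Kq (x y : V) v :=
  if v == y then 3 * N else if v == x then (3 * N).+1
  else if col v < col y then key0 v else (3 * N).+2 + key0 v.
Definition Q x y := sort (leK (Kq x y)) (enum V).
Definition G (x y : V) := [seq z <- P0 | z != y] ++ [:: x; y] ++ [seq z <- P0 | z != x].
Definition blk (p : V * V) :=
  if col p.2 <= (col p.1).+1 then P0 ++ Q p.1 p.2 else G p.1 p.2.
Definition nonedges := [seq p <- enum {: V * V} | ~~ E p.1 p.2 && (key0 p.1 < key0 p.2)].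
Definition W := P0 ++ flatten (map blk nonedges).

Lemma P0f s t : key0 s < key0 t -> [seq z <- P0 | pr s t z] = [:: s; t].
Proof. exact: filter_sortK. Qed.

Lemma Kq_edge x y s t : ~~ E x y -> key0 x < key0 y -> col y <= (col x).+1 ->
  E s t -> key0 s < key0 t -> Kq x y s < Kq x y t.
Proof.
move=> nxy kxy cy est kst.
have cst := edge_col est kst.
have cxy := key0_colle kxy.
have k3s := key0_lt3 s; have k3t := key0_lt3 t.
rewrite /Kq.
have ts : t != s by apply/eqP => h; move: kst; rewrite h ltnn.
case: (eqVneq s y) => [esy|nsy].
  have ntx : t != x by apply/eqP => h; move: est nxy; rewrite esy h Esym => ->.
  rewrite esy in cst *; rewrite -esy (negbTE ts) (negbTE ntx) esy.
  have -> : (col t < col y) = false by lia.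
  lia.
case: (eqVneq s x) => [esx|nsx].
  have nty : t != y by apply/eqP => h; move: est nxy; rewrite esx h => ->.
  rewrite esx in cst ts *; rewrite (negbTE nty) (negbTE ts).
  have -> : (col t < col y) = false by apply/negbTE; rewrite -leqNgt; lia.
  lia.
case: (eqVneq t y) => [ety|nty].
  rewrite ety in cst *; rewrite cst; lia.
case: (eqVneq t x) => [etx|ntx].
  rewrite etx in cst *; have -> : col s < col y by lia. lia.
case: (ltnP (col s) (col y)) => c1; case: (ltnP (col t) (col y)) => c2; lia.
Qed.

Lemma blk_edge p s t : p \in nonedges -> E s t -> key0 s < key0 t ->
  [seq z <- blk p | pr s t z] = [:: s; t; s; t].
Proof.
case: p => x y; rewrite mem_filter /= => /andP[/andP[nxy kxy] _] est kst.
have cst := edge_col est kst.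
rewrite /blk /=; case: ifP => cy.
  by rewrite filter_cat P0f // filter_sortK // Kq_edge.
have cx0 : col x = 0 by have := colB y; lia.
have cy2 : col y = 2 by have := colB y; lia.
have nsy : s != y by apply/eqP => h; move: cst; rewrite h cy2; have := colB t; lia.
have ntx : t != x by apply/eqP => h; move: cst; rewrite h cx0.
have e1 : (s == y) = false by apply/negbTE.
have e2 : (y == s) = false by rewrite eq_sym e1.
have e3 : (t == x) = false by apply/negbTE.
have e4 : (x == t) = false by rewrite eq_sym e3.
rewrite /G !filter_cat !(filter_comm (pr s t)) P0f //= /pr e1 e2 e3 e4 /=.
case: (eqVneq s x) => [esx|nsx].
  have nty : (t == y) = false by apply/negbTE/eqP => h; move: est nxy; rewrite esx h => ->.
  by rewrite nty eq_sym nty /= esx.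
case: (eqVneq t y) => [ety|nty] /=; first by rewrite ety.
by [].
Qed.

Lemma blk_nonedge x y : ~~ E x y -> key0 x < key0 y ->
  ~~ sorted (fun a b => a != b) [seq z <- blk (x, y) | pr x y z].
Proof.
move=> nxy kxy.
have xy : x != y by apply/eqP => h; move: kxy; rewrite h ltnn.
have yx : (y == x) = false by rewrite eq_sym; apply/negbTE.
rewrite /blk /=; case: ifP => cy.
  rewrite filter_cat P0f // (eq_filter (pr_sym x y)) filter_sortK /=; last first.
    rewrite /Kq !eqxx (negbTE xy); lia.
  by rewrite eqxx andbF.
rewrite /G !filter_cat !(filter_comm (pr x y)) P0f //= /pr eqxx yx (negbTE xy) /=.
by rewrite !eqxx /= eqxx.
Qed.

Lemma in_split (T : eqType) (s : seq T) a : a \in s -> exists l1 l2, s = l1 ++ a :: l2.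
Proof. by case/splitPr => l1 l2; exists l1, l2. Qed.

Lemma flat4 (x y : V) (l : seq (V * V)) :
  flatten [seq [:: x; y; x; y] | _ <- l] = flatten (nseq (size l).*2 [:: x; y]).
Proof. by elim: l => [|p l IH] //=; rewrite IH. Qed.

Lemma main_lt x y : key0 x < key0 y -> (E x y <-> alternate x y W).
Proof.
move=> kxy; split.
  move=> e; left.
  have -> : [seq z <- W | (z == x) || (z == y)] = altseq x y 0 ((size nonedges).*2.+1.*2).
    rewrite -flat_alt /W filter_cat filter_flatten -/(pr x y) P0f //.
    have -> : [seq [seq x0 <- i | pr x y x0] | i <- [seq blk i | i <- nonedges]]
      = [seq [:: x; y; x; y] | _ <- nonedges].
      rewrite -map_comp; apply/eq_in_map => p hp /=; exact: blk_edge.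
    by rewrite flat4.
  by rewrite size_altseq.
move=> al; apply/negPn/negP => nxy.
have xy : x != y by apply/eqP => h; move: kxy; rewrite h ltnn.
have := alt_sorted xy al.
have hp : (x, y) \in nonedges by rewrite mem_filter /= nxy kxy mem_enum.
have [l1 [l2 El]] := in_split hp.
rewrite /W El map_cat flatten_cat /= !filter_cat -/(pr x y).
move/cat_sorted2 => [_ /cat_sorted2 [_ /cat_sorted2 [H _]]].
move: H; exact/negP/(blk_nonedge nxy kxy).
Qed.

Lemma alt_sym (x y : V) w : alternate x y w -> alternate y x w.
Proof.
rewrite /alternate /= (eq_filter (pr_sym x y)) -/(pr y x).
by case=> h; [right|left].
Qed.

Lemma wr3 : word_representable E.
Proof.
exists W; split.
  by move=> v; rewrite mem_cat mem_sort mem_enum.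
move=> x y xy; case: (ltngtP (key0 x) (key0 y)) => k.
- exact: main_lt.
- rewrite Esym; split => h.
    by apply: alt_sym; apply/(main_lt k).
  by apply/(main_lt k); apply: alt_sym.
- by move: xy; rewrite (key0_inj k) eqxx.
Qed.

End Col.

Lemma sep X Y e m r0 : X < m -> Y < m -> Y = (X + e) %% m -> e < m -> r0 <= e ->
  r0 <= m - e -> m <= 3 * r0 -> 3 * X %/ m != 3 * Y %/ m.
Proof.
move=> Xm Ym HY em r1 r2 r3.
have m0 : 0 < m by lia.
have HY' : Y = X + e \/ Y + m = X + e.
  case: (ltnP (X + e) m) => c.
    by left; rewrite HY modn_small.
  right; rewrite HY; have -> : X + e = (X + e - m) + m by lia.
  rewrite modnDr modn_small; lia.
apply/eqP => k.
have d1 := divn_eq (3 * X) m; have d2 := divn_eq (3 * Y) m.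
have l1 := ltn_pmod (3 * X) m0; have l2 := ltn_pmod (3 * Y) m0.
rewrite k in d1; set K := (3 * Y %/ m) * m in d1 d2.
lia.
Qed.

Lemma circ_sym m i j : circ_dist m i j = circ_dist m j i.
Proof.
rewrite /circ_dist; case: (ltngtP i j) => c //; by rewrite c.
Qed.

Lemma circ_cases m u v : u < m -> v < m ->
  (v %% m = (u + circ_dist m u v) %% m) \/ (u %% m = (v + circ_dist m u v) %% m).
Proof.
move=> um vm; rewrite /circ_dist /=.
case: (leqP u v) => c.
  case: (leqP (v - u) (m - (v - u))) => c2.
    by left; congr (_ %% _); lia.
  right; have -> : v + (m - (v - u)) = u + m by lia.
  by rewrite modnDr.
case: (leqP (u - v) (m - (u - v))) => c2.
  by right; congr (_ %% _); lia.
left; have -> : u + (m - (u - v)) = v + m by lia.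
by rewrite modnDr.
Qed.

Lemma shift_pos m h u v d : (v %% m = (u + d) %% m) ->
  (v * h) %% m = ((u * h) %% m + (d * h) %% m) %% m.
Proof.
move=> H.
by rewrite modnDm -mulnDl -modnMml H modnMml.
Qed.

Theorem theorem19 (n a b : nat) :
  0 < n -> 0 < a < n -> 0 < b < n -> a != b ->
  (exists g p q : nat,
      [/\ g < 2 * n, coprime g (2 * n), p < 2 * n, q < 2 * n &
      [/\ p * g = a %[mod 2 * n], q * g = b %[mod 2 * n] &
          (2 * n + 2) %/ 3 <= minn (minn p q) (minn (2 * n - p) (2 * n - q))]]) ->
  word_representable (@circulant (2 * n) [:: a; b; n]).
Proof.
move=> n0 /andP[a0 an] /andP[b0 bn] ab [g [p [q [gm cop pm qm [pa qb rr]]]]].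
move: gm cop pm qm pa qb rr; move Em : (2 * n) => m gm cop pm qm pa qb rr.
have m1 : 1 < m by clear -n0 Em; lia.
have g0 : 0 < g.
  case: g {gm pa qb} cop => // /eqP; rewrite gcd0n => h; move: h m1; clear; lia.
case: (egcdnP m g0) => h kn Hh _.
have hg : (g * h) %% m = 1.
  by rewrite mulnC Hh (eqP cop) modnMDl modn_small.
have hodd : odd h.
  apply/negPn/negP => ho.
  have : odd ((g * h) %% m) = odd (g * h) by apply: odd_mod; rewrite -Em oddM.
  by rewrite hg oddM (negbTE ho) andbF.
move: rr; set r0 := (m + 2) %/ 3 => rr.
have [r3 rn] : m <= 3 * r0 /\ r0 <= n.
  have := divn_eq (m + 2) 3; have := ltn_pmod (m + 2) (isT : 0 < 3).
  rewrite /r0; set z := (m + 2) %/ 3; move: z Em; clear; lia.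
have rp : [/\ r0 <= p, r0 <= q, r0 <= m - p & r0 <= m - q].
  move: rr; clear; rewrite /minn; case: ifP; case: ifP; case: ifP; move=> *; split; lia.
case: rp => rp1 rp2 rp3 rp4.
have modA : forall (d e : nat), e * g = d %[mod m] -> d < m -> e < m -> (d * h) %% m = e.
  move=> d e H dm em.
  rewrite -(modn_small dm) -H modnMml -mulnA -modnMmr hg muln1 modn_small //.
have am : a < m by clear -an Em; lia.
have bm : b < m by clear -bn Em; lia.
have pA : (a * h) %% m = p by apply: modA.
have qB : (b * h) %% m = q by apply: modA.
have nN : (n * h) %% m = n.
  have Eh := odd_double_half h; rewrite hodd -muln2 in Eh.
  have -> : n * h = h./2 * m + n.
    rewrite -Em -Eh; move: (h./2) => k; clear; simpl; nia.
  by rewrite modnMDl modn_small //; clear -n0 Em; lia.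
pose col (v : 'I_m) := 3 * ((v * h) %% m) %/ m.
apply: (@wr3 _ _ col).
- by move=> x y; rewrite /circulant circ_sym.
- move=> v; rewrite /col ltn_divLR; last by clear -m1; lia.
  have := ltn_pmod (v * h) (ltnW m1); clear; lia.
move=> u v; rewrite /circulant => Hd.
move: Hd; set d := circ_dist m u v => Hd.
have [e [He em e1 e2]] : exists e, [/\ (d * h) %% m = e, e < m, r0 <= e & r0 <= m - e].
  move: Hd; rewrite !inE => /orP[/eqP->|/orP[/eqP->|/eqP->]].
  - by exists p; split.
  - by exists q; split.
  - exists n; split => //; clear -Em n0 rn; lia.
have Xm := ltn_pmod (u * h) (ltnW m1).
have Ym := ltn_pmod (v * h) (ltnW m1).
rewrite /col; case: (circ_cases (ltn_ord u) (ltn_ord v)) => /shift_pos H.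
  by apply: (sep Xm Ym _ em e1 e2 r3); rewrite H -/d He.
rewrite eq_sym; by apply: (sep Ym Xm _ em e1 e2 r3); rewrite H -/d He.
Qed.
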